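(* Let $\Bbbk$ be a field, $V$ a finite-dimensional $\Bbbk$-vector space and $R$ a Hecke symmetry on $V$ with parameter $q$. Assume $\dim\Upsilon^{(n)}=1$ and $\Upsilon^{(n+1)}=0$ for some $n>0$, and fix $0\neq t\in\Upsilon^{(n)}$. Then there are linear operators $\theta,\bar\theta\in GL(V)$ such that $$R_n^{(n+1)}R_{n-1}^{(n+1)}\cdots R_1^{(n+1)}(vt)=t\,\theta(v),\qquad R_1^{(n+1)}R_2^{(n+1)}\cdots R_n^{(n+1)}(tv)=\bar\theta(v)\,t$$ for all $v\in V$. Moreover, $\bar\theta=q^{n+1}\theta^{-1}$.
   Context: A Hecke symmetry on $V$ with parameter $0\neq q\in\Bbbk$ is a linear map $R:V\otimes V\to V\otimes V$ satisfying $(R\otimes\mathrm{Id}_V)(\mathrm{Id}_V\otimes R)(R\otimes\mathrm{Id}_V)=(\mathrm{Id}_V\otimes R)(R\otimes\mathrm{Id}_V)(\mathrm{Id}_V\otimes R)$ and $(R-q\,\mathrm{Id})(R+\mathrm{Id})=0$ ($q=-1$ allowed). In the tensor algebra products are written $ab=a\otimes b$. For $p\ge2$, $1\le i\le p-1$, $R_i^{(p)}=\mathrm{Id}_V^{\otimes(i-1)}\otimes R\otimes\mathrm{Id}_V^{\otimes(p-i-1)}$ on $V^{\otimes p}$. $\Upsilon^{(0)}=\Bbbk$, $\Upsilon^{(1)}=V$, $\Upsilon^{(p)}=\bigcap_{i=1}^{p-1}(R_i^{(p)}-q\,\mathrm{Id})V^{\otimes p}$ for $p\ge2$. *)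

(* Defs.v *)
From HB Require Import structures.
From mathcomp Require Import all_boot all_order all_algebra.
Set Implicit Arguments. Unset Strict Implicit. Unset Printing Implicit Defensive.
Import Order.TTheory GRing.Theory Num.Theory.
Local Open Scope ring_scope.

Section Tensors.
Variables (K : fieldType) (d : nat).

Definition vecV := {ffun 'I_d -> K^o}.

(* multi-indices of length p and V^{(x)p}: a tensor is the family of its
   coordinates on the basis e_{x_0} (x) ... (x) e_{x_{p-1}}. *)
Definition midx (p : nat) := {ffun 'I_p -> 'I_d}.
Definition tens (p : nat) := {ffun midx p -> K^o}.

Definition pair2 (a b : 'I_d) : midx 2 :=
  [ffun k : 'I_2 => if k == ord0 then a else b].
Definition e2 (a b : 'I_d) : tens 2 := [ffun z => ((z == pair2 a b)%:R : K)].

Lemma succ_lt_pred (p : nat) (i : 'I_p.-1) : (i.+1 < p)%N.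
Proof. case: p i => [|p] [i Hi] //=. Qed.

(* 0-based positions i and i+1 of V^{(x)p}, for i < p-1
   (the paper's R_{i+1}^{(p)} acts on the 1-based factors i+1, i+2) *)
Definition lpos p (i : 'I_p.-1) : 'I_p := Ordinal (ltnW (succ_lt_pred i)).
Definition rpos p (i : 'I_p.-1) : 'I_p := Ordinal (succ_lt_pred i).

(* R_{i+1}^{(p)} = Id^{(x)i} (x) R (x) Id^{(x)(p-i-2)}, in coordinates *)
Definition Rfun (R : 'End(tens 2)) p (i : 'I_p.-1) (f : tens p) : tens p :=
  [ffun y : midx p =>
     \sum_(x : midx p | [forall k, ((k != lpos i) && (k != rpos i)) ==> (x k == y k)])
        R (e2 (x (lpos i)) (x (rpos i))) (pair2 (y (lpos i)) (y (rpos i))) * f x].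

Definition Rop (R : 'End(tens 2)) p (i : 'I_p.-1) : 'End(tens p) := linfun (Rfun R i).

(* Upsilon^{(p)} = \bigcap_{i} (R_i^{(p)} - q Id) V^{(x)p}
   (empty intersection = whole space, giving Upsilon^{(0)} = k, Upsilon^{(1)} = V) *)
Definition Ups (R : 'End(tens 2)) (q : K) p : {vspace tens p} :=
  (\bigcap_(i < p.-1) limg (Rop R i - q *: \1%VF))%VS.

Definition braid (R : 'End(tens 2)) : Prop :=
  forall f : tens 3,
    @Rop R 3 (0 : 'I_2) (@Rop R 3 (1 : 'I_2) (@Rop R 3 (0 : 'I_2) f))
    = @Rop R 3 (1 : 'I_2) (@Rop R 3 (0 : 'I_2) (@Rop R 3 (1 : 'I_2) f)).
Definition hecke_rel (R : 'End(tens 2)) (q : K) : Prop :=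
  forall f : tens 2, R (R f + f) - q *: (R f + f) = 0.
Definition hecke_symmetry (R : 'End(tens 2)) (q : K) : Prop :=
  q != 0 /\ braid R /\ hecke_rel R q.

Definition lmul n (v : vecV) (t : tens n) : tens n.+1 :=
  [ffun x : midx n.+1 => v (x ord0) * t [ffun k : 'I_n => x (lift ord0 k)]].
Definition rmul n (t : tens n) (v : vecV) : tens n.+1 :=
  [ffun x : midx n.+1 => t [ffun k : 'I_n => x (widen_ord (leqnSn n) k)] * v (x ord_max)].

(* R_n^{(n+1)} ... R_1^{(n+1)} w  and  R_1^{(n+1)} ... R_n^{(n+1)} w *)
Definition Rdown (R : 'End(tens 2)) n (w : tens n.+1) : tens n.+1 :=
  foldr (fun i : 'I_n => @Rop R n.+1 i) w (rev (enum 'I_n)).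
Definition Rup (R : 'End(tens 2)) n (w : tens n.+1) : tens n.+1 :=
  foldr (fun i : 'I_n => @Rop R n.+1 i) w (enum 'I_n).

End Tensors.

(* Main.v *)
Require Import Defs.
From HB Require Import structures.
From mathcomp Require Import all_boot all_order all_algebra.
From mathcomp Require Import zify ring.
Import Order.TTheory GRing.Theory Num.Theory.
Set Implicit Arguments. Unset Strict Implicit. Unset Printing Implicit Defensive.
Local Open Scope ring_scope.

Section LinfunE.
Variables (K : fieldType) (aT rT : vectType K) (f : aT -> rT) (fL : linear f).
HB.instance Definition _ := GRing.isLinear.Build K aT rT *:%R f fL.
Lemma linfunE' : linfun f =1 f. Proof. exact: lfunE. Qed.
End LinfunE.

Section Gen.
Variables (K : fieldType) (d : nat) (R : 'End(tens K d 2)).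

Definition rc (a b c e : 'I_d) : K := R (e2 K a b) (pair2 c e).
Definition upd p (y : midx d p) (k : 'I_p) (a : 'I_d) : midx d p :=
  [ffun j => if j == k then a else y j].

Lemma updE p (y : midx d p) k a j : upd y k a j = if j == k then a else y j.
Proof. by rewrite ffunE. Qed.

Lemma lpos_rpos p (i : 'I_p.-1) : (lpos i == rpos i) = false.
Proof. by apply/negbTE; rewrite -val_eqE /= neq_ltn ltnSn. Qed.

Lemma Rfun_linear p (i : 'I_p.-1) : linear (Rfun R i).
Proof.
move=> a f g; apply/ffunP=> y; rewrite !ffunE scaler_sumr -big_split /=.
by apply: eq_bigr => x _; rewrite !ffunE mulrDr mulrCA.
Qed.

Lemma RopE0 p (i : 'I_p.-1) f : Rop R i f = Rfun R i f.
Proof. exact: (linfunE' (Rfun_linear i)). Qed.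

Lemma RopE p (i : 'I_p.-1) f y : Rop R i f y =
  \sum_(a : 'I_d) \sum_(b : 'I_d)
     rc a b (y (lpos i)) (y (rpos i)) * f (upd (upd y (lpos i) a) (rpos i) b).
Proof.
rewrite RopE0 ffunE pair_big /=.
set l := lpos i; set r := rpos i.
rewrite (reindex_onto (fun ab : 'I_d * 'I_d => upd (upd y l ab.1) r ab.2)
           (fun x : midx d p => (x l, x r))) /=.
  have E1 a b : upd (upd y l a) r b l = a.
    by rewrite updE /l /r lpos_rpos updE eqxx.
  have E2 a b : upd (upd y l a) r b r = b by rewrite updE eqxx.
  apply: eq_big => [[a b]|[a b] _] /=; rewrite E1 E2 //.
  rewrite eqxx andbT.
  apply/forallP=> k; apply/implyP=> /andP[/negbTE kl /negbTE kr].
  by rewrite !updE kl kr.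
move=> x /forallP Px; apply/ffunP=> k; rewrite !updE.
case: eqP => [->//|/eqP kr]; case: eqP => [->//|/eqP kl].
by have /implyP/(_ (introT andP (conj kl kr)))/eqP := Px k.
Qed.


Section Pull.
Variables (p s : nat) (e : 'I_s -> 'I_p) (einj : injective e).

Definition pull (y : midx d p) (z : midx d s) : midx d p :=
  [ffun j => if [pick o | e o == j] is Some o then z o else y j].
Definition res (y : midx d p) (g : tens K d p) : tens K d s :=
  [ffun z => g (pull y z)].

Lemma pull_in y z o : pull y z (e o) = z o.
Proof.
rewrite ffunE; case: pickP => [o' /eqP/einj -> //|/(_ o)].
by rewrite eqxx.
Qed.

Lemma pull_out y z j : (forall o, e o != j) -> pull y z j = y j.
Proof.
move=> H; rewrite ffunE; case: pickP => [o' eo|//].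
by have := H o'; rewrite eo.
Qed.

Lemma pull_cases (y : midx d p) (z : midx d s) (j : 'I_p) : (exists o, j = e o) \/ (forall o, e o != j).
Proof.
case: (pickP (fun o => e o == j)) => [o /eqP <-|H]; first by left; exists o.
by right=> o; rewrite H.
Qed.

Lemma pull_upd y z o a : pull y (upd z o a) = upd (pull y z) (e o) a.
Proof.
apply/ffunP=> j; case: (pull_cases y z j) => [[o' ->]|H].
  by rewrite pull_in !updE pull_in (inj_eq einj).
by rewrite pull_out // updE eq_sym (negbTE (H o)) pull_out.
Qed.

Lemma pull_self y : pull y [ffun o => y (e o)] = y.
Proof.
apply/ffunP=> j; case: (pull_cases y [ffun o => y (e o)] j) => [[o ->]|H].
  by rewrite pull_in ffunE.
by rewrite pull_out.
Qed.

Lemma pull_ext (y y' : midx d p) (z : midx d s) : (forall j, (forall o, e o != j) -> y j = y' j) ->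
  pull y z = pull y' z.
Proof.
move=> H; apply/ffunP=> j; case: (pull_cases y z j) => [[o ->]|Hj].
  by rewrite !pull_in.
by rewrite !pull_out // H.
Qed.

Lemma res_det g h : (forall y, res y g = res y h) -> g = h.
Proof.
move=> H; apply/ffunP=> x.
by have := congr1 (fun F : tens K d s => F [ffun o => x (e o)]) (H x);
  rewrite !ffunE pull_self.
Qed.

Lemma resD y g h : res y (g + h) = res y g + res y h.
Proof. by apply/ffunP=> z; rewrite !ffunE. Qed.
Lemma resZ y a g : res y (a *: g) = a *: res y g.
Proof. by apply/ffunP=> z; rewrite !ffunE. Qed.
Lemma resN y g : res y (- g) = - res y g.
Proof. by apply/ffunP=> z; rewrite !ffunE. Qed.
Lemma resB y g h : res y (g - h) = res y g - res y h.
Proof. by rewrite resD resN. Qed.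
Lemma res0 y : res y 0 = 0.
Proof. by apply/ffunP=> z; rewrite !ffunE. Qed.

Lemma res_Rop (i : 'I_p.-1) (j : 'I_s.-1) y g :
  e (lpos j) = lpos i -> e (rpos j) = rpos i ->
  res y (Rop R i g) = Rop R j (res y g).
Proof.
move=> El Er; apply/ffunP=> z; rewrite ffunE !RopE -El -Er !pull_in.
apply: eq_bigr => a _; apply: eq_bigr => b _.
by rewrite ffunE !pull_upd.
Qed.

End Pull.


Lemma updC p (y : midx d p) k k' a b : k != k' ->
  upd (upd y k a) k' b = upd (upd y k' b) k a.
Proof.
move=> kk; apply/ffunP=> j; rewrite !updE.
case: (j =P k) => [->|//]; by rewrite (negbTE kk).
Qed.

Lemma updNE p (y : midx d p) k a j : j != k -> upd y k a j = y j.
Proof. by move=> jk; rewrite updE (negbTE jk). Qed.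

Lemma sum4C (F : 'I_d -> 'I_d -> 'I_d -> 'I_d -> K) :
  \sum_a \sum_b \sum_c \sum_e F a b c e = \sum_c \sum_e \sum_a \sum_b F a b c e.
Proof.
rewrite pair_big; under eq_bigr do rewrite pair_big.
rewrite [RHS]pair_big; under [RHS]eq_bigr do rewrite pair_big.
by rewrite exchange_big.
Qed.

Lemma mul_sum2 (x : K) (F : 'I_d -> 'I_d -> K) :
  x * (\sum_c \sum_e F c e) = \sum_c \sum_e x * F c e.
Proof. by rewrite big_distrr; apply: eq_bigr => c _; rewrite big_distrr. Qed.

Lemma Rop_comm p (i j : 'I_p.-1) f : (i.+1 < j)%N ->
  Rop R i (Rop R j f) = Rop R j (Rop R i f).
Proof.
move=> ij; apply/ffunP=> y; rewrite !RopE.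
have ne (k k' : 'I_p) : (k < k')%N -> k != k'.
  by move=> h; rewrite -val_eqE /= neq_ltn h.
have h1 : lpos j != lpos i by rewrite eq_sym ne //= ltnW // ltnW.
have h2 : lpos j != rpos i by rewrite eq_sym ne.
have h3 : rpos j != lpos i by rewrite eq_sym ne //= ltnW // ltnW.
have h4 : rpos j != rpos i by rewrite eq_sym ne //= ltnW.
have h1' := h1; have h2' := h2; have h3' := h3; have h4' := h4.
rewrite eq_sym in h1'; rewrite eq_sym in h2'; rewrite eq_sym in h3'; rewrite eq_sym in h4'.
under eq_bigr do under eq_bigr do rewrite RopE mul_sum2.
under [RHS]eq_bigr do under eq_bigr do rewrite RopE mul_sum2.
rewrite sum4C.
apply: eq_bigr => c _; apply: eq_bigr => e _.
apply: eq_bigr => a _; apply: eq_bigr => b _.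
rewrite !updNE //.
rewrite mulrCA; congr (_ * (_ * f _)).
apply/ffunP=> k; rewrite !updE.
case: (k =P rpos j) => [->|_]; first by rewrite (negbTE h4) (negbTE h3).
case: (k =P lpos j) => [->|_]; first by rewrite (negbTE h2) (negbTE h1).
by [].
Qed.


Lemma ltn_sh k s p (H : (k + s <= p)%N) (o : 'I_s) : (k + o < p)%N.
Proof. by rewrite (leq_trans _ H) // ltn_add2l. Qed.
Definition sh k s p (H : (k + s <= p)%N) : 'I_s -> 'I_p :=
  fun o => Ordinal (ltn_sh H o).
Lemma sh_inj k s p (H : (k + s <= p)%N) : injective (sh H).
Proof. by move=> o o' /(congr1 val) /= /addnI /val_inj. Qed.

Lemma pair2_eq (z : midx d 2) a b :
  (z == pair2 a b) = (z ord0 == a) && (z ord_max == b).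
Proof.
apply/eqP/andP => [->|[/eqP <- /eqP <-]]; first by rewrite !ffunE.
apply/ffunP=> k; rewrite ffunE; case: ifP => [/eqP -> //|k0].
congr (z _); apply/val_inj; case: k k0 => [[|[|k]] Hk] //=.
Qed.

Lemma exp2 (g : tens K d 2) : g = \sum_a \sum_b g (pair2 a b) *: e2 K a b.
Proof.
apply/ffunP=> z; rewrite sum_ffunE.
rewrite (eq_bigr (fun a => if a == z ord0 then g z else 0)) => [|a _].
  by rewrite -big_mkcond big_pred1_eq.
rewrite sum_ffunE (eq_bigr (fun b => if (a == z ord0) && (b == z ord_max) then g z else 0)) => [|b _].
  case: (a =P z ord0) => _ /=; last by rewrite big1.
  by rewrite -big_mkcond big_pred1_eq.
rewrite !ffunE pair2_eq (eq_sym a) (eq_sym b).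
case: (z ord0 =P a) => [<-|]; case: (z ord_max =P b) => [<-|] /=;
  rewrite ?scaler0 //.
have -> : pair2 (z ord0) (z ord_max) = z by apply/esym/eqP; rewrite pair2_eq !eqxx.
exact: mulr1.
Qed.

Lemma Rop2 (g : tens K d 2) : Rop R (p:=2) ord0 g = R g.
Proof.
apply/ffunP=> y; rewrite RopE {2}(exp2 g) linear_sum sum_ffunE.
have ey : y = pair2 (y (@lpos 2 ord0)) (y (@rpos 2 ord0)).
  apply/eqP; rewrite pair2_eq.
  by apply/andP; split; apply/eqP; congr (y _); apply/val_inj.
apply: eq_bigr => a _; rewrite linear_sum sum_ffunE.
apply: eq_bigr => b _; rewrite linearZ ffunE mulrC /rc -ey.
have -> : upd (upd y (@lpos 2 ord0) a) (@rpos 2 ord0) b = pair2 a b.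
  by apply/eqP; rewrite pair2_eq !updE -!val_eqE /= !eqxx.
reflexivity.
Qed.


Lemma hecke_p q (hr : hecke_rel R q) p (i : 'I_p.-1) f :
  Rop R i (Rop R i f + f) - q *: (Rop R i f + f) = 0.
Proof.
have H : (i + 2 <= p)%N by have := ltn_ord i; lia.
apply: (res_det (@sh_inj _ _ _ H)) => y.
have E g : res (sh H) y (Rop R i g) = Rop R (p:=2) ord0 (res (sh H) y g).
  by apply: res_Rop => //; [exact: sh_inj| |]; apply/val_inj; rewrite /= ?addn0 ?addn1.
by rewrite res0 resB resZ !(resD, E) !Rop2 hr.
Qed.

Lemma braid_p (hb : braid R) p (i i' : 'I_p.-1) f : val i' = i.+1 ->
  Rop R i (Rop R i' (Rop R i f)) = Rop R i' (Rop R i (Rop R i' f)).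
Proof.
move=> Hi.
have H : (i + 3 <= p)%N by have := ltn_ord i'; rewrite Hi; lia.
apply: (res_det (@sh_inj _ _ _ H)) => y.
have E0 g : res (sh H) y (Rop R i g) = Rop R (p:=3) (0 : 'I_2) (res (sh H) y g).
  by apply: res_Rop => //; [exact: sh_inj| |]; apply/val_inj; rewrite /= ?addn0 ?addn1.
have E1 g : res (sh H) y (Rop R i' g) = Rop R (p:=3) (1 : 'I_2) (res (sh H) y g).
  by apply: res_Rop => //; [exact: sh_inj| |]; apply/val_inj; rewrite /= Hi; lia.
by rewrite !(E0, E1) hb.
Qed.


Lemma res_lmul n y (v : vecV K d) (s : tens K d n) :
  res (@lift n.+1 ord0) y (lmul v s) = v (y ord0) *: s.
Proof.
apply/ffunP=> z; rewrite ffunE [in LHS]ffunE [in RHS]ffunE pull_out; last first.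
  by move=> o; rewrite eq_sym neq_lift.
congr (_ * s _); apply/ffunP=> k; rewrite ffunE pull_in //; exact: lift_inj.
Qed.

Lemma wid_inj n : injective (@widen_ord n n.+1 (leqnSn n)).
Proof. by move=> a b H; apply/val_inj; exact: (congr1 val H). Qed.

Lemma res_rmul n y (v : vecV K d) (s : tens K d n) :
  res (@widen_ord n n.+1 (leqnSn n)) y (rmul s v) = v (y ord_max) *: s.
Proof.
apply/ffunP=> z; rewrite ffunE [in LHS]ffunE [in RHS]ffunE pull_out; last first.
  by move=> o; rewrite -val_eqE /= neq_ltn ltn_ord.
rewrite mulrC; congr (_ * s _); apply/ffunP=> k; rewrite ffunE pull_in //.
exact: wid_inj.
Qed.

Lemma lmul_Rop n (i : 'I_n.-1) (i' : 'I_n) v s : val i' = i.+1 ->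
  lmul v (Rop R i s) = Rop R (p:=n.+1) i' (lmul v s).
Proof.
move=> Hi; apply: (res_det (@lift_inj n.+1 ord0)) => y.
rewrite (@res_Rop _ _ _ (@lift_inj n.+1 ord0) i' i); first by rewrite !res_lmul linearZ.
  by apply/val_inj; rewrite /= /bump /= Hi.
by apply/val_inj; rewrite /= /bump /= Hi.
Qed.

Lemma rmul_Rop n (i : 'I_n.-1) (i' : 'I_n) v s : val i' = i ->
  rmul (Rop R i s) v = Rop R (p:=n.+1) i' (rmul s v).
Proof.
move=> Hi; apply: (res_det (@wid_inj n)) => y.
rewrite (@res_Rop _ _ _ (@wid_inj n) i' i); first by rewrite !res_rmul linearZ.
  by apply/val_inj; rewrite /= Hi.
by apply/val_inj; rewrite /= Hi.
Qed.

Lemma lmulD n v (s1 s2 : tens K d n) : lmul v (s1 + s2) = lmul v s1 + lmul v s2.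
Proof. by apply/ffunP=> x; rewrite !ffunE mulrDr. Qed.
Lemma lmulZ n v c (s : tens K d n) : lmul v (c *: s) = c *: lmul v s.
Proof. by apply/ffunP=> x; rewrite !ffunE mulrCA. Qed.
Lemma lmulB n v (s1 s2 : tens K d n) : lmul v (s1 - s2) = lmul v s1 - lmul v s2.
Proof. by apply/ffunP=> x; rewrite !ffunE mulrBr. Qed.
Lemma rmulD n v (s1 s2 : tens K d n) : rmul (s1 + s2) v = rmul s1 v + rmul s2 v.
Proof. by apply/ffunP=> x; rewrite !ffunE mulrDl. Qed.
Lemma rmulZ n v c (s : tens K d n) : rmul (c *: s) v = c *: rmul s v.
Proof. by apply/ffunP=> x; rewrite !ffunE scalerAl. Qed.
Lemma rmulB n v (s1 s2 : tens K d n) : rmul (s1 - s2) v = rmul s1 v - rmul s2 v.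
Proof. by apply/ffunP=> x; rewrite !ffunE mulrBl. Qed.
Lemma lmul_linear n (s : tens K d n) : linear (fun v => lmul v s).
Proof. by move=> c v1 v2; apply/ffunP=> x; rewrite !ffunE mulrDl scalerAl. Qed.
Lemma rmul_linear n (s : tens K d n) : linear (fun v => rmul s v).
Proof. by move=> c v1 v2; apply/ffunP=> x; rewrite !ffunE mulrDr scalerAr. Qed.

Lemma slice_span p s (e : 'I_s -> 'I_p) (einj : injective e) (j0 : 'I_p)
  (Hout : forall j, (forall o, e o != j) -> j = j0) g (t : tens K d s) z0 :
  t z0 != 0 -> (forall y, exists c, res e y g = c *: t) ->
  forall y, res e y g = (res e [ffun _ => y j0] g z0 / t z0) *: t.
Proof.
move=> tz0 H y.
have -> : res e [ffun _ => y j0] g = res e y g.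
  apply/ffunP=> z; rewrite !ffunE (@pull_ext _ _ _ einj _ y) // => j /Hout ->.
  by rewrite ffunE.
have [c ->] := H y; rewrite ffunE mulfK //.
Qed.

End Gen.

Lemma scalerKE (K : fieldType) (a x : K^o) : a *: x = a * x.
Proof. by []. Qed.


Lemma limgE (K : fieldType) (d : nat) (R : 'End(tens K d 2)) (q : K) p
  (i : 'I_p.-1) (x : tens K d p) :
  (x \in limg (Rop R i - q *: \1%VF)) <-> exists y, x = Rop R i y - q *: y.
Proof.
split.
  by move/memv_imgP=> [u _ ->]; exists u; rewrite add_lfunE opp_lfunE scale_lfunE id_lfunE.
move=> [y ->]; apply/memv_imgP; exists y; first exact: memvf.
by rewrite add_lfunE opp_lfunE scale_lfunE id_lfunE.
Qed.

Lemma memUps (K : fieldType) (d : nat) (R : 'End(tens K d 2)) (q : K) p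
  (x : tens K d p) :
  (x \in Ups R q p) <-> forall i : 'I_p.-1, x \in limg (Rop R i - q *: \1%VF).
Proof.
rewrite /Ups memvE; split.
  by move/subv_bigcapP=> H i; rewrite memvE; exact: H.
by move=> H; apply/subv_bigcapP=> i _; rewrite -memvE.
Qed.

Section Main.
Variables (K : fieldType) (d : nat) (R : 'End(tens K d 2)) (q : K) (m : nat).
Hypothesis (hs : hecke_symmetry R q).

Definition T (j : nat) (f : tens K d m.+2) : tens K d m.+2 :=
  Rop R (p:=m.+2) (inord j) f.

Arguments T : simpl never.

Lemma TD j f g : T j (f + g) = T j f + T j g.
Proof. by rewrite /T linearD. Qed.
Lemma TZ j c f : T j (c *: f) = c *: T j f.
Proof. by rewrite /T linearZ. Qed.
Lemma TN j f : T j (- f) = - T j f.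
Proof. by rewrite /T linearN. Qed.
Lemma TB j f g : T j (f - g) = T j f - T j g.
Proof. by rewrite /T linearB. Qed.

Lemma ffZ p (a : K) (g : tens K d p) y : (a *: g) y = a * g y.
Proof. by rewrite ffunE. Qed.
Lemma ffD p (g h : tens K d p) y : (g + h) y = g y + h y.
Proof. by rewrite ffunE. Qed.
Lemma ffN p (g : tens K d p) y : (- g) y = - g y.
Proof. by rewrite ffunE. Qed.
Lemma ffB p (g h : tens K d p) y : (g - h) y = g y - h y.
Proof. by rewrite ffD ffN. Qed.

Lemma T_hecke j f : T j (T j f) = (q - 1) *: T j f + q *: f.
Proof.
case: hs => _ [_ hr].
have /ffunP H := hecke_p hr (inord j : 'I_(m.+2).-1) f.
apply/ffunP=> y; have := H y; rewrite /T linearD !(ffB, ffD, ffZ) ffunE => E.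
by apply/eqP; rewrite -subr_eq0 -[X in _ == X]E; apply/eqP; ring.
Qed.

Lemma inordK' j : (j <= m)%N -> val (inord j : 'I_m.+1) = j.
Proof. by move=> h; apply: inordK. Qed.

Lemma T_comm j k f : (j.+1 < k)%N -> (k <= m)%N -> T j (T k f) = T k (T j f).
Proof.
move=> jk km; apply: Rop_comm; rewrite !inordK' //; lia.
Qed.

Lemma T_braid j f : (j.+1 <= m)%N -> T j (T j.+1 (T j f)) = T j.+1 (T j (T j.+1 f)).
Proof.
case: hs => _ [hb _] jm; apply: braid_p => //; rewrite !inordK' //; lia.
Qed.

Fixpoint P k f := if k is k'.+1 then T k' (P k' f) else f.
Fixpoint Q k f := if k is k'.+1 then Q k' (T k' f) else f.

Lemma PD k f g : P k (f + g) = P k f + P k g.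
Proof. by elim: k => //= k ->; rewrite TD. Qed.
Lemma PZ k c f : P k (c *: f) = c *: P k f.
Proof. by elim: k => //= k ->; rewrite TZ. Qed.
Lemma PN k f : P k (- f) = - P k f.
Proof. by rewrite -scaleN1r PZ scaleN1r. Qed.
Lemma PB k f g : P k (f - g) = P k f - P k g.
Proof. by rewrite PD PN. Qed.
Lemma QD k f g : Q k (f + g) = Q k f + Q k g.
Proof. by elim: k f g => //= k IH f g; rewrite TD IH. Qed.
Lemma QZ k c f : Q k (c *: f) = c *: Q k f.
Proof. by elim: k f => //= k IH f; rewrite TZ IH. Qed.
Lemma QN k f : Q k (- f) = - Q k f.
Proof. by rewrite -scaleN1r QZ scaleN1r. Qed.
Lemma QB k f g : Q k (f - g) = Q k f - Q k g.
Proof. by rewrite QD QN. Qed.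

Lemma L0 k j f : (k < j)%N -> (j <= m)%N -> T j (P k f) = P k (T j f).
Proof.
elim: k => //= k IH kj jm.
by rewrite -(T_comm _ kj jm) IH // ltnW.
Qed.

Lemma L1 i k f : (i.+2 <= k)%N -> (k <= m.+1)%N -> T i (P k f) = P k (T i.+1 f).
Proof.
move=> ik; rewrite -(subnKC ik); elim: (k - i.+2)%N => [|l IH] km.
  have hi : (i.+1 <= m)%N by lia.
  rewrite addn0 /= (T_braid _ hi).
  by rewrite (L0 _ (ltnSn i) hi).
have h1 : (i.+1 < i.+2 + l)%N by lia.
have h2 : (i.+2 + l <= m)%N by lia.
rewrite addnS /= (T_comm _ h1 h2) IH //; lia.
Qed.

Lemma Q0 k j f : (k < j)%N -> (j <= m)%N -> T j (Q k f) = Q k (T j f).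
Proof.
elim: k f => //= k IH f kj jm.
by rewrite IH ?(T_comm _ kj jm) // ltnW.
Qed.

Lemma Q1 i k f : (i.+2 <= k)%N -> (k <= m.+1)%N -> T i.+1 (Q k f) = Q k (T i f).
Proof.
move=> ik; rewrite -(subnKC ik); elim: (k - i.+2)%N f => [|l IH] f km.
  have hi : (i.+1 <= m)%N by lia.
  rewrite addn0 /= (Q0 _ (ltnSn i) hi).
  by rewrite -(T_braid _ hi).
have h1 : (i.+1 < i.+2 + l)%N by lia.
have h2 : (i.+2 + l <= m)%N by lia.
rewrite addnS /= IH; last by lia.
by rewrite (T_comm _ h1 h2).
Qed.


Definition Im j (x : tens K d m.+2) := exists y, x = T j y - q *: y.

Lemma Im0 j : Im j 0.
Proof. by exists 0; rewrite /T linear0 scaler0 subr0. Qed.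
Lemma ImD j x x' : Im j x -> Im j x' -> Im j (x + x').
Proof.
move=> [y ->] [y' ->]; exists (y + y').
by rewrite TD scalerDr opprD addrACA.
Qed.
Lemma ImZ j c x : Im j x -> Im j (c *: x).
Proof.
move=> [y ->]; exists (c *: y).
by rewrite TZ scalerBr !scalerA mulrC.
Qed.
Lemma Im_sum j (I : Type) (r : seq I) (Pr : pred I) (F : I -> tens K d m.+2) :
  (forall i, Pr i -> Im j (F i)) -> Im j (\sum_(i <- r | Pr i) F i).
Proof.
by move=> H; apply: (big_ind (Im j)) => //; [exact: Im0| exact: ImD].
Qed.
Lemma Im_neg j x : Im j x -> T j x = - x.
Proof.
move=> [y ->]; rewrite TB TZ T_hecke; apply/ffunP=> z.
rewrite !(ffB, ffD, ffZ, ffN); ring.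
Qed.


Variable (t : tens K d m.+1).
Hypotheses (hdim : \dim (Ups R q m.+1) = 1%N) (h0 : Ups R q m.+2 = 0%VS)
  (tnz : t != 0) (tU : t \in Ups R q m.+1).

Lemma tIm (i : 'I_m) : exists s, t = Rop R (p:=m.+1) i s - q *: s.
Proof. by apply/limgE; move/memUps: tU; apply. Qed.

Lemma span x : x \in Ups R q m.+1 -> exists c, x = c *: t.
Proof.
have -> : Ups R q m.+1 = <[t]>%VS.
  apply/esym/eqP; rewrite eqEdim hdim dim_vline tnz leqnn andbT.
  by rewrite -memvE.
by move/vlineP.
Qed.

Lemma Ups0 z : (forall j, (j <= m)%N -> Im j z) -> z = 0.
Proof.
move=> H; apply/eqP; rewrite -memv0 -h0; apply/memUps => i; apply/limgE.
have [y ->] := H i (ltn_ord i); exists y; by rewrite /T inord_val.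
Qed.

Lemma lmul_Im v j : (0 < j <= m)%N -> Im j (lmul v t).
Proof.
move=> /andP[j0 jm]; have ji : (j.-1 < m)%N by lia.
have [s ->] := tIm (Ordinal ji); exists (lmul v s).
rewrite lmulB lmulZ /T (@lmul_Rop _ _ _ m.+1 (Ordinal ji) (inord j)) //.
by rewrite inordK' //=; lia.
Qed.

Lemma rmul_Im v j : (j < m)%N -> Im j (rmul t v).
Proof.
move=> jm; have [s ->] := tIm (Ordinal jm); exists (rmul s v).
rewrite rmulB rmulZ /T (@rmul_Rop _ _ _ m.+1 (Ordinal jm) (inord j)) //.
by rewrite inordK' //; lia.
Qed.


Lemma S1 g : (forall j, (j < m)%N -> Im j g) ->
  forall y, exists c, res (@widen_ord m.+1 m.+2 (leqnSn m.+1)) y g = c *: t.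
Proof.
move=> H y; apply: span; apply/memUps => i; apply/limgE.
have [y' ->] := H i (ltn_ord i); exists (res (@widen_ord m.+1 m.+2 (leqnSn m.+1)) y y').
rewrite resB resZ /T (@res_Rop K d R _ _ _ (@wid_inj m.+1) (inord i) i) //.
  by apply/val_inj; rewrite /= inordK' //; have := ltn_ord i; rewrite /=; lia.
by apply/val_inj; rewrite /= inordK' //; have := ltn_ord i; rewrite /=; lia.
Qed.

Lemma S2 g : (forall j, (0 < j <= m)%N -> Im j g) ->
  forall y, exists c, res (@lift m.+2 ord0) y g = c *: t.
Proof.
move=> H y; apply: span; apply/memUps => i; apply/limgE.
have hi : (0 < i.+1 <= m)%N by rewrite /= ltn_ord.
have [y' ->] := H i.+1 hi; exists (res (@lift m.+2 ord0) y y').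
rewrite resB resZ /T (@res_Rop K d R _ _ _ (@lift_inj m.+2 ord0) (inord i.+1) i) //.
  by apply/val_inj; rewrite /= inordK' /bump //=; have := ltn_ord i; rewrite /=; lia.
by apply/val_inj; rewrite /= inordK' /bump //=; have := ltn_ord i; rewrite /=; lia.
Qed.


Lemma Tw v j : (0 < j <= m)%N -> T j (lmul v t) = - lmul v t.
Proof. by move=> h; apply: Im_neg; apply: lmul_Im. Qed.

Lemma zrel v : \sum_(k < m.+2) ((-1) ^+ k * q ^+ (m.+1 - k)) *: P k (lmul v t) = 0.
Proof.
apply: Ups0 => i im.
rewrite -(big_mkord xpredT (fun k => ((-1) ^+ k * q ^+ (m.+1 - k)) *: P k (lmul v t))).
rewrite (@big_cat_nat _ _ _ i) //=; last by lia.
rewrite (@big_ltn _ _ _ i); last by lia.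
rewrite (@big_ltn _ _ _ i.+1); last by lia.
rewrite [X in _ + X]addrA.
apply: ImD; [|apply: ImD].
- rewrite big_seq; apply: Im_sum => k; rewrite mem_index_iota => /andP[_ ki].
  apply: ImZ.
  have [y ->] := lmul_Im v (introT andP (conj (leq_ltn_trans (leq0n k) ki) im)).
  by exists (P k y); rewrite PB PZ L0.
- exists (((-1) ^+ i.+1 * q ^+ (m - i)) *: P i (lmul v t)).
  rewrite TZ /= scalerA.
  have -> : (m.+1 - i = (m - i).+1)%N by lia.
  have -> : (m.+1 - i.+1 = m - i)%N by lia.
  apply/ffunP=> y; rewrite !(ffB, ffD, ffZ, ffN) !exprS; ring.
- rewrite big_seq; apply: Im_sum => k; rewrite mem_index_iota => /andP[ik km].
  apply: ImZ.
  have h1 : (0 < i.+1 <= m)%N by lia.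
  have [y ->] := lmul_Im v h1.
  by exists (P k y); rewrite PB PZ L1 //; lia.
Qed.

Lemma QP v l k : (l < k)%N -> (k <= m.+1)%N ->
  Q l (P k (lmul v t)) = (-1) ^+ l *: P k (lmul v t).
Proof.
elim: l => [|l IH] lk km; first by rewrite scale1r.
rewrite /= L1 //.
rewrite Tw; last by lia.
by rewrite PN QN IH ?exprS ?mulN1r ?scaleNr ?mul1r //; lia.
Qed.

Lemma Zform v k : (k <= m.+1)%N -> Q k (P k (lmul v t)) =
  q ^+ k *: lmul v t +
  (q - 1) *: \sum_(j < k) (q ^+ (k - j.+1) * (-1) ^+ j) *: P j.+1 (lmul v t).
Proof.
elim: k => [|k IH] km; first by rewrite big_ord0 scaler0 addr0 scale1r.
rewrite /= T_hecke QD !QZ IH; last by lia.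
rewrite (@QP v k k.+1) //.
rewrite big_ord_recr /= subnn expr0 mul1r.
set S := \sum_(j < k) _.
have -> : \sum_(j < k) (q ^+ (k.+1 - j.+1) * (-1) ^+ j) *: P j.+1 (lmul v t) = q *: S.
  rewrite /S scaler_sumr; apply: eq_bigr => j _; rewrite scalerA mulrA.
  by rewrite subSS -(subnSK (ltn_ord j)) exprS.
apply/ffunP=> y; rewrite !(ffB, ffD, ffZ, ffN) !exprS; ring.
Qed.

Lemma YX v : Q m.+1 (P m.+1 (lmul v t)) = q ^+ m.+2 *: lmul v t.
Proof.
have := zrel v; rewrite big_ord_recl expr0 mul1r subn0.
under eq_bigr do rewrite lift0.
have -> : \sum_(i < m.+1) ((-1) ^+ i.+1 * q ^+ (m.+1 - i.+1)) *:
     P i.+1 (lmul v t) =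
   - \sum_(j < m.+1) (q ^+ (m.+1 - j.+1) * (-1) ^+ j) *: P j.+1 (lmul v t).
  rewrite -sumrN; apply: eq_bigr => j _.
  by rewrite exprS mulN1r mulNr scaleNr mulrC.
move=> /subr0_eq E; rewrite Zform // -E.
apply/ffunP=> y; rewrite !(ffB, ffD, ffZ, ffN) !exprS; ring.
Qed.


Lemma Rdown_P (w : tens K d m.+2) : Rdown R w = P m.+1 w.
Proof.
have E : enum 'I_m.+1 = map (fun j => inord j) (iota 0 m.+1).
  apply: (inj_map val_inj); rewrite val_enum_ord -map_comp.
  rewrite -[LHS]map_id; apply/eq_in_map => j; rewrite mem_iota => /andP[_ h] /=.
  by rewrite inordK.
rewrite /Rdown /= E -map_rev foldr_map.
have H k : foldr (fun x z => T x z) w (rev (iota 0 k)) = P k w.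
  elim: k => [|k IH] //.
  by rewrite -[k.+1]addn1 iotaD cats1 rev_rcons /= IH add0n addn1.
exact: (H m.+1).
Qed.

Lemma Rup_Q (w : tens K d m.+2) : Rup R w = Q m.+1 w.
Proof.
have E : enum 'I_m.+1 = map (fun j => inord j) (iota 0 m.+1).
  apply: (inj_map val_inj); rewrite val_enum_ord -map_comp.
  rewrite -[LHS]map_id; apply/eq_in_map => j; rewrite mem_iota => /andP[_ h] /=.
  by rewrite inordK.
rewrite /Rup /= E foldr_map.
have H k w' : foldr (fun x z => T x z) w' (iota 0 k) = Q k w'.
  elim: k w' => [|k IH] w' //.
  by rewrite -[k.+1]addn1 iotaD cats1 foldr_rcons /= IH add0n addn1.
exact: (H m.+1).
Qed.

Lemma ffZv (a : K) (g : vecV K d) b : (a *: g) b = a * g b.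
Proof. by rewrite ffunE. Qed.
Lemma ffDv (g h : vecV K d) b : (g + h) b = g b + h b.
Proof. by rewrite ffunE. Qed.

Lemma tz : exists z0, t z0 != 0.
Proof.
apply/existsP; move: tnz; apply: contraNT => /existsPn H.
apply/eqP/ffunP => z; rewrite ffunE; exact/eqP/negbNE/(H z).
Qed.

Lemma theta_ex : exists theta : 'End(vecV K d),
  forall v, P m.+1 (lmul v t) = rmul t (theta v).
Proof.
have [z0 tz0] := tz.
pose e := @widen_ord m.+1 m.+2 (leqnSn m.+1).
pose f (v : vecV K d) : vecV K d :=
  [ffun b => P m.+1 (lmul v t) (pull e [ffun _ => b] z0) / t z0].
have fL : linear f.
  move=> a v1 v2; apply/ffunP=> b; rewrite ffDv ffZv !ffunE.
  rewrite (lmul_linear t a v1 v2) PD PZ ffD ffZ.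
  by rewrite mulrDl mulrA.
exists (linfun f) => v; rewrite (linfunE' fL).
apply: (res_det (@wid_inj m.+1)) => y; rewrite res_rmul.
have Hout : forall j : 'I_m.+2, (forall o, e o != j) -> j = ord_max.
  move=> j H; apply/val_inj => /=; have := ltn_ord j; rewrite ltnS leq_eqVlt.
  case/orP => [/eqP //|jm]; have := H (Ordinal jm); by rewrite -val_eqE /= eqxx.
have S := @S1 (P m.+1 (lmul v t)).
rewrite (slice_span (@wid_inj m.+1) Hout tz0 _ y).
  by rewrite !ffunE.
apply: S => j jm.
have h1 : (0 < j.+1 <= m)%N by rewrite /= jm.
have [y' ->] := lmul_Im v h1.
by exists (P m.+1 y'); rewrite PB PZ L1.
Qed.

Lemma thetab_ex : exists thetab : 'End(vecV K d),
  forall v, Q m.+1 (rmul t v) = lmul (thetab v) t.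
Proof.
have [z0 tz0] := tz.
pose e := @lift m.+2 ord0.
pose f (v : vecV K d) : vecV K d :=
  [ffun b => Q m.+1 (rmul t v) (pull e [ffun _ => b] z0) / t z0].
have fL : linear f.
  move=> a v1 v2; apply/ffunP=> b; rewrite ffDv ffZv !ffunE.
  rewrite (rmul_linear t a v1 v2) QD QZ ffD ffZ.
  by rewrite mulrDl mulrA.
exists (linfun f) => v; rewrite (linfunE' fL).
apply: (res_det (@lift_inj m.+2 ord0)) => y; rewrite res_lmul.
have Hout : forall j : 'I_m.+2, (forall o, e o != j) -> j = ord0.
  move=> j H; apply/val_inj => /=; case: j H => [[|j] Hj] H //=.
  have jm : (j < m.+1)%N by [].
  have := H (Ordinal jm); by rewrite -val_eqE /= /bump /= add1n eqxx.
have S := @S2 (Q m.+1 (rmul t v)).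
rewrite (slice_span (@lift_inj m.+2 ord0) Hout tz0 _ y).
  by rewrite !ffunE.
apply: S => j /andP[j0 jm].
have ji : (j.-1 < m)%N by lia.
have [y' ->] := rmul_Im v ji.
exists (Q m.+1 y').
have h2 : (j.-1.+2 <= m.+1)%N by lia.
have Eq := @Q1 j.-1 m.+1 y' h2 (leqnn _); rewrite prednK // in Eq.
by rewrite QB QZ Eq.
Qed.

End Main.

Lemma lmul_inj (K : fieldType) (d n : nat) (t : tens K d n) (v v' : vecV K d) :
  t != 0 -> lmul v t = lmul v' t -> v = v'.
Proof.
move=> tnz E; apply/ffunP=> b.
have := congr1 (res (@lift n.+1 ord0) [ffun _ => b]) E.
rewrite !res_lmul ffunE => /eqP; rewrite -subr_eq0 -scalerBl scaler_eq0 subr_eq0.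
by rewrite (negbTE tnz) orbF => /eqP.
Qed.

Theorem proposition3p1 (K : fieldType) (d : nat) (R : 'End(tens K d 2)) (q : K)
  (n : nat) (t : tens K d n) :
  hecke_symmetry R q ->
  (0 < n)%N ->
  \dim (Ups R q n) = 1%N ->
  Ups R q n.+1 = 0%VS ->
  t != 0 -> t \in Ups R q n ->
  exists theta thetab : 'End(vecV K d),
    [/\ bijective theta, bijective thetab,
        (forall v, Rdown R (lmul v t) = rmul t (theta v)),
        (forall v, Rup R (rmul t v) = lmul (thetab v) t)
      & thetab = q ^+ n.+1 *: (theta^-1)%VF].
Proof.
case: n t => [|m] t // hs _ hdim h0 tnz tU.
have [th Hth] := theta_ex hs hdim tnz tU.
have [tb Htb] := thetab_ex hs hdim tnz tU.
have q0 : q != 0 by case: hs.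
set c := q ^+ m.+2.
have c0 : c != 0 by rewrite expf_neq0.
have tbth v : tb (th v) = c *: v.
  apply: (lmul_inj tnz); rewrite -Htb -Hth (YX hs hdim h0 tnz tU).
  by apply/ffunP=> x; rewrite !ffunE scalerAl.
have thinj : injective th.
  move=> v v' E; have := congr1 tb E; rewrite !tbth => /(congr1 ( *:%R c^-1)).
  by rewrite !scalerA mulVf // !scale1r.
have ker0 : lker th == 0%VS by apply/lker0P.
have tbE : tb = c *: (th^-1)%VF.
  apply/lfunP=> v; rewrite scale_lfunE.
  by rewrite -{1}(lker0_lfunVK ker0 v) tbth.
exists th, tb; split.
- exists (th^-1)%VF; [exact: lker0_lfunK | exact: lker0_lfunVK].
- exists (fun v => c^-1 *: th v).
    move=> v; rewrite tbE scale_lfunE linearZ /= lker0_lfunVK //.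
    by rewrite scalerA mulVf // scale1r.
  by move=> v; rewrite linearZ /= tbth scalerA mulVf // scale1r.
- by move=> v; rewrite Rdown_P Hth.
- by move=> v; rewrite Rup_Q Htb.
- exact: tbE.
Qed.
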